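(* Let $R$ be a Dedekind domain, $I\subseteq R$ an ideal with $R/I$ finite, and $G\in R^{n\times n}$. Let $U,V\in\mathrm{GL}_n(R/I)$ and $d_1,\ldots,d_n\in R$ with $d_{i+1}R+I\subseteq d_iR+I$ for every $i$ be such that $G\equiv U D V\bmod I$ with $D=\mathrm{diag}(d_1,\ldots,d_n)$. Consider a random symmetric $n\times n$ matrix $X\in R^{n\times n}$ whose upper-triangular entries $\{X_{i,j}:i\leq j\}$ have independent and uniformly distributed reductions in $R/I$. Then $$\mathbb{P}\bigl(G^{T}XG\equiv 0\bmod I\bigr)=\prod_{i=1}^n\prod_{j=i}^n\frac{\mathcal{N}_R(d_id_jR+I)}{\mathcal{N}_R(I)}.$$
   Context: The norm of an ideal $J\subseteq R$ is $\mathcal{N}_R(J)=\#(R/J)$. Such $U,V,d_1,\ldots,d_n$ (a Smith normal form of $G$ over $R/I$) always exist since $R/I$ is a principal ideal ring. *)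

(* Defs.v *)
From HB Require Import structures.
From mathcomp Require Import all_boot all_order all_algebra.
From mathcomp Require Import boolp.
From Stdlib Require Import ClassicalEpsilon.
Set Implicit Arguments. Unset Strict Implicit. Unset Printing Implicit Defensive.
Import Order.TTheory GRing.Theory Num.Theory.
Local Open Scope ring_scope.

Definition is_ideal (R : comNzRingType) (J : R -> Prop) : Prop :=
  [/\ J 0, (forall x y, J x -> J y -> J (x + y)) & (forall r x, J x -> J (r * x))].

Definition ideal_sub (R : comNzRingType) (J K : R -> Prop) : Prop :=
  forall x, J x -> K x.

Definition principal_plus (R : comNzRingType) (a : R) (J : R -> Prop) : R -> Prop :=
  fun x => exists r y, J y /\ x = a * r + y.

Definition prime_ideal (R : comNzRingType) (P : R -> Prop) : Prop :=
  [/\ is_ideal P, ~ P 1 & forall x y, P (x * y) -> P x \/ P y].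

Definition maximal_ideal (R : comNzRingType) (M : R -> Prop) : Prop :=
  [/\ is_ideal M, ~ M 1 &
      forall J, is_ideal J -> ideal_sub M J -> ideal_sub J M \/ J 1].

Definition noetherian (R : comNzRingType) : Prop :=
  forall J : R -> Prop, is_ideal J ->
    exists (m : nat) (g : 'I_m -> R),
      forall x, J x <-> exists c : 'I_m -> R, x = \sum_(i < m) c i * g i.

Definition integrally_closed (R : idomainType) : Prop :=
  forall x : {fraction R},
    (exists p : {poly R}, p \is monic /\ root (map_poly (@FracField.tofrac R) p) x) ->
    exists r : R, x = @FracField.tofrac R r.

Definition dedekind_domain (R : idomainType) : Prop :=
  [/\ noetherian R, integrally_closed R &
      forall P : R -> Prop, prime_ideal P -> (exists x, P x /\ x != 0) -> maximal_ideal P].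

(* s is a complete, irredundant system of representatives of R/J *)
Definition reps (R : comNzRingType) (J : R -> Prop) (s : seq R) : Prop :=
  (forall x, exists2 y, y \in s & J (x - y)) /\
  (forall a b : nat, (a < size s)%N -> (b < size s)%N -> J (s`_a - s`_b) -> a = b).

Definition index_is (R : comNzRingType) (J : R -> Prop) (k : nat) : Prop :=
  exists s : seq R, size s = k /\ reps J s.

(* The norm N_R(J) = #(R/J) (meaningful when R/J is finite). *)
Definition ideal_norm (R : comNzRingType) (J : R -> Prop) : nat :=
  epsilon (inhabits 0%N) (fun k => index_is J k).

Definition mxcong (R : comNzRingType) (J : R -> Prop) (m n : nat)
  (A B : 'M[R]_(m, n)) : Prop := forall i j, J (A i j - B i j).

Definition unit_mod (R : comNzRingType) (J : R -> Prop) (n : nat) (U : 'M[R]_n) : Prop :=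
  exists W : 'M[R]_n, mxcong J (U *m W) 1%:M /\ mxcong J (W *m U) 1%:M.

(* Symmetric index patterns: choices of a residue class (index into s) for
   each entry, equal on (i,j) and (j,i); uniform over these = independent
   uniform reductions of the upper-triangular entries. *)
Definition sym_patterns (n k : nat) : {set {ffun 'I_n * 'I_n -> 'I_k}} :=
  [set f : {ffun 'I_n * 'I_n -> 'I_k} | [forall i : 'I_n, forall j : 'I_n, f (i, j) == f (j, i)]].

Definition mx_of_pattern (R : comNzRingType) (s : seq R) (n : nat)
  (f : {ffun 'I_n * 'I_n -> 'I_(size s)}) : 'M[R]_n :=
  \matrix_(i < n, j < n) s`_(f (i, j)).

Definition prob_GtXG_zero (R : comNzRingType) (I : R -> Prop) (s : seq R) (n : nat)
  (G : 'M[R]_n) : rat :=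
  (#|[set f in sym_patterns n (size s) |
        `[< mxcong I (G^T *m mx_of_pattern f *m G) 0 >] ]|%:R)
  / (#|sym_patterns n (size s)|%:R).

(* Main.v *)
Require Import Defs.
From HB Require Import structures.
From mathcomp Require Import all_boot all_order all_algebra.
From mathcomp Require Import boolp.
From mathcomp Require Import ring.
From Stdlib Require Import ClassicalEpsilon.
Set Implicit Arguments. Unset Strict Implicit. Unset Printing Implicit Defensive.
Import Order.TTheory GRing.Theory Num.Theory.
Local Open Scope ring_scope.
Section Cong.
Variables (R : comNzRingType) (J : R -> Prop) (HJ : is_ideal J).

Lemma J0 : J 0. Proof. by case: HJ. Qed.
Lemma JD x y : J x -> J y -> J (x + y). Proof. by case: HJ => _ h _; apply: h. Qed.
Lemma JMl r x : J x -> J (r * x). Proof. by case: HJ => _ _ h; apply: h. Qed.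
Lemma JMr r x : J x -> J (x * r). Proof. by rewrite mulrC; apply: JMl. Qed.
Lemma JN x : J x -> J (- x). Proof. by move=> h; rewrite -mulN1r; apply: JMl. Qed.
Lemma JB x y : J x -> J y -> J (x - y). Proof. by move=> hx hy; apply: JD => //; apply: JN. Qed.
Lemma Jsum (I : Type) (r : seq I) (P : pred I) (F : I -> R) :
  (forall i, P i -> J (F i)) -> J (\sum_(i <- r | P i) F i).
Proof. by move=> h; apply: big_ind => //; [apply: J0 | apply: JD]. Qed.
Lemma cg_refl x : J (x - x). Proof. by rewrite subrr; apply: J0. Qed.
Lemma cg_sym x y : J (x - y) -> J (y - x). Proof. by move=> /JN; rewrite opprB. Qed.
Lemma cg_trans x y z : J (x - y) -> J (y - z) -> J (x - z).
Proof. by move=> h1 h2; have := JD h1 h2; rewrite addrA subrK. Qed.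

Lemma mxcong_refl m n (A : 'M[R]_(m, n)) : mxcong J A A.
Proof. by move=> i j; apply: cg_refl. Qed.
Lemma mxcong_sym m n (A B : 'M[R]_(m, n)) : mxcong J A B -> mxcong J B A.
Proof. by move=> h i j; apply: cg_sym. Qed.
Lemma mxcong_trans m n (A B C : 'M[R]_(m, n)) :
  mxcong J A B -> mxcong J B C -> mxcong J A C.
Proof. by move=> h1 h2 i j; apply: cg_trans (h1 i j) (h2 i j). Qed.
Lemma mxcong_tr m n (A B : 'M[R]_(m, n)) : mxcong J A B -> mxcong J A^T B^T.
Proof. by move=> h i j; rewrite !mxE; apply: h. Qed.
Lemma mxcong_mul m n p (A A' : 'M[R]_(m, n)) (B B' : 'M[R]_(n, p)) :
  mxcong J A A' -> mxcong J B B' -> mxcong J (A *m B) (A' *m B').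
Proof.
move=> hA hB i j; rewrite !mxE -sumrB; apply: Jsum => k _.
have -> : A i k * B k j - A' i k * B' k j =
  (A i k - A' i k) * B k j + A' i k * (B k j - B' k j) by ring.
by apply: JD; [apply: JMr | apply: JMl].
Qed.
End Cong.
Section Norm.
Variables (R : comNzRingType) (J : R -> Prop) (HJ : is_ideal J).

Lemma reps_idx s : reps J s -> forall x, exists b : 'I_(size s), J (x - s`_b).
Proof.
case=> hc _ x; have [y ys hy] := hc x.
have hi : (index y s < size s)%N by rewrite index_mem.
by exists (Ordinal hi); rewrite /= nth_index.
Qed.

Lemma reps_le s1 s2 : reps J s1 -> reps J s2 -> (size s1 <= size s2)%N.
Proof.
move=> h1 h2.
have [f hf] := @choice _ _ (fun (a : 'I_(size s1)) (b : 'I_(size s2)) => J (s1`_a - s2`_b)) (fun a => reps_idx h2 s1`_a).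
have inj : injective f.
  move=> a a' e; apply: val_inj; case: h1 => _ /(_ a a' (ltn_ord a) (ltn_ord a')); apply.
  have h2' := cg_sym HJ (hf a'); rewrite -e in h2'.
  exact: (cg_trans HJ (hf a) h2').
by have := leq_card f inj; rewrite !card_ord.
Qed.

Lemma index_uniq k1 k2 : index_is J k1 -> index_is J k2 -> k1 = k2.
Proof.
move=> [s1 [<- h1]] [s2 [<- h2]]; apply/eqP; rewrite eqn_leq.
by rewrite !reps_le.
Qed.

Lemma ideal_normE k : index_is J k -> ideal_norm J = k.
Proof.
move=> h; apply: index_uniq => //; rewrite /ideal_norm.
by apply: epsilon_spec; exists k.
Qed.
End Norm.
Section Count.
Variables (R : comNzRingType) (I : R -> Prop) (HI : is_ideal I) (s : seq R)
  (Hs : reps I s) (ridx : R -> 'I_(size s))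
  (Hr : forall x, I (x - s`_(ridx x))).

Local Notation k := (size s).

Lemma irr (t u : 'I_k) : I (s`_t - s`_u) -> t = u.
Proof. move=> h; apply: val_inj; move: Hs => [_ H]; exact: H (ltn_ord t) (ltn_ord u) h. Qed.

Lemma ridx_eq x (t : 'I_k) : I (x - s`_t) -> ridx x = t.
Proof.
move=> h; apply: irr; exact: (cg_trans HI (cg_sym HI (Hr x)) h).
Qed.

Lemma transl (P : R -> Prop) (HP : forall x y, I (x - y) -> P x -> P y) c :
  #|[set t : 'I_k | `[< P (s`_t + c) >]]| = #|[set t : 'I_k | `[< P s`_t >]]|.
Proof.
pose h (t : 'I_k) := ridx (s`_t + c).
have inj : injective h.
  move=> t u e; apply: irr.
  have h1 : I (s`_t + c - s`_(h u)) by rewrite -e; apply: Hr.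
  have h2 := Hr (s`_u + c).
  have := cg_trans HI h1 (cg_sym HI h2).
  rewrite opprD addrACA subrr addr0. done.
rewrite -(card_preimset [set t : 'I_k | `[< P s`_t >]] inj); apply: eq_card => t; rewrite !inE.
apply/asboolP/asboolP => H.
  by apply: HP H; rewrite /h; apply: Hr.
apply: HP H; exact: (cg_sym HI (Hr _)).
Qed.

Variable a : R.
Local Notation J := (principal_plus a I).

Lemma J_ideal : is_ideal J.
Proof.
split.
- by exists 0, 0; split; [exact (J0 HI) | rewrite mulr0 addr0].
- move=> x y [r [z [hz ->]]] [r' [z' [hz' ->]]].
  by exists (r + r'), (z + z'); split; [exact (JD HI hz hz') | rewrite mulrDr addrACA].
- move=> r x [r0 [z [hz ->]]].
  by exists (r * r0), (r * z); split; [exact (JMl HI r hz) | rewrite mulrDr mulrCA].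
Qed.

Lemma IJ x : I x -> J x.
Proof. by move=> h; exists 0, x; rewrite mulr0 add0r. Qed.

Lemma J_compat x y : I (x - y) -> J x -> J y.
Proof.
move=> h [r [z [hz e]]]; exists r, (z - (x - y)); split; first exact (JB HI hz h).
by rewrite addrA -e opprB addrC subrK.
Qed.

Definition Kset := [set t : 'I_k | `[< I (a * s`_t) >]].
Definition Imset := [set t : 'I_k | `[< J s`_t >]].

Lemma card_k1 : k = (#|Imset| * #|Kset|)%N.
Proof.
pose mm (v : 'I_k) := ridx (a * s`_v).
have mmIm v : mm v \in Imset.
  rewrite inE; apply/asboolP; apply: (J_compat (Hr (a * s`_v))).
  by exists s`_v, 0; split; [exact (J0 HI) | rewrite addr0].
transitivity (\sum_(v : 'I_k) 1)%N; first by rewrite sum1_card card_ord.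
rewrite (partition_big mm (mem Imset)) //= -sum_nat_const; apply: eq_bigr => y; rewrite inE => /asboolP [r [z [hz ey]]].
rewrite sum1dep_card -(transl (P := fun z => I (a * z)) _ (- s`_(ridx r))); last first.
  move=> x x' hx hax; have := JB HI hax (JMl HI a hx).
  by rewrite mulrBr opprB addrC subrK.
apply: eq_card => v; rewrite !inE.
have e1 : I (s`_y - a * s`_(ridx r)).
  rewrite ey; have := JD HI hz (JMl HI a (Hr r)).
  by rewrite mulrBr addrA [z + _]addrC.
apply/eqP/asboolP => [Hm | H].
  rewrite -Hm /mm in e1; have := cg_trans HI (Hr (a * s`_v)) e1.
  by rewrite mulrBr.
rewrite /mm; apply: ridx_eq; rewrite mulrBr in H.
exact (cg_trans HI H (cg_sym HI e1)).
Qed.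
Definition Erel : rel 'I_k := fun t u => `[< J (s`_t - s`_u) >].

Lemma E_equiv : {in [set: 'I_k] & &, equivalence_rel Erel}.
Proof.
move=> x y z _ _ _; split; first by apply/asboolP; exact (cg_refl J_ideal _).
move=> /asboolP hxy; apply/asboolP/asboolP => h.
  exact (cg_trans J_ideal (cg_sym J_ideal hxy) h).
exact (cg_trans J_ideal hxy h).
Qed.

Definition Pt := equivalence_partition Erel [set: 'I_k].
Lemma Ppart : partition Pt [set: 'I_k].
Proof. exact: equivalence_partitionP E_equiv. Qed.

Lemma card_k2 : k = (#|Pt| * #|Imset|)%N.
Proof.
transitivity #|[set: 'I_k]|; first by rewrite cardsT card_ord.
rewrite (card_partition Ppart) -sum_nat_const; apply: eq_bigr => B /imsetP [x _ ->].
rewrite -(transl (P := J) J_compat (- s`_x)); apply: eq_card => y; rewrite !inE /=.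
by apply/asboolP/asboolP => h; have := cg_sym J_ideal h.
Qed.

Lemma Eblock x y : (y \in pblock Pt x) = Erel x y.
Proof. exact: (pblock_equivalence_partition E_equiv (in_setT x) (in_setT y)). Qed.

Definition pk (B : {set 'I_k}) := odflt (ridx 0) [pick x in B].

Lemma pkB B : B \in Pt -> pk B \in B.
Proof.
move=> BP; rewrite /pk; case: pickP => [x Hx // | none].
have eB : B = set0 by apply/setP => x; rewrite inE none.
by move: Ppart => /and3P [_ _ /negP]; case; rewrite -eB.
Qed.

Lemma reps_J : index_is J #|Pt|.
Proof.
have tiP : trivIset Pt by case/and3P: Ppart.
exists [seq s`_(pk B) | B <- enum Pt]; split; first by rewrite size_map cardE.
split.
  move=> x; set t := ridx x; set B := pblock Pt t.
  have BP : B \in Pt by apply: pblock_mem; rewrite (cover_partition Ppart) inE.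
  exists s`_(pk B); first by apply/mapP; exists B; rewrite ?mem_enum.
  have : Erel t (pk B) by rewrite -Eblock; exact: pkB.
  move/asboolP => h; exact (cg_trans J_ideal (IJ (Hr x)) h).
move=> i j; rewrite size_map => hi hj.
rewrite !(nth_map set0) //.
set Ba := nth set0 (enum Pt) i; set Bb := nth set0 (enum Pt) j.
have BaP : Ba \in Pt by rewrite -mem_enum mem_nth.
have BbP : Bb \in Pt by rewrite -mem_enum mem_nth.
move=> h; have Eab : Erel (pk Ba) (pk Bb) by apply/asboolP.
have inBa : pk Bb \in Ba by rewrite -(def_pblock tiP BaP (pkB BaP)) Eblock.
have eB : Ba = Bb by rewrite -(def_pblock tiP BaP inBa) (def_pblock tiP BbP (pkB BbP)).
by apply/eqP; rewrite -(nth_uniq set0 hi hj (enum_uniq _)); apply/eqP.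
Qed.

Lemma normJ : ideal_norm J = #|Kset|.
Proof.
rewrite (ideal_normE J_ideal reps_J).
have kpos : (0 < k)%N.
  case: Hs => hc _; have [y ys _] := hc 0.
  by case: (s) ys.
have := card_k1; have := card_k2 => e2 e1.
have : (0 < #|Imset| * #|Kset|)%N by rewrite -e1.
rewrite muln_gt0 => /andP [mpos _].
apply/eqP; rewrite -(eqn_pmul2r mpos); apply/eqP.
by rewrite -e2 [in RHS]mulnC -e1.
Qed.

Lemma normI : ideal_norm I = k.
Proof. apply (ideal_normE HI); by exists s. Qed.
End Count.
Section Fam.
Variables (n k : nat) (t0 : 'I_k).
Local Notation fT := {ffun 'I_n * 'I_n -> 'I_k}.

Lemma card_sym_fam (Q : 'I_n * 'I_n -> pred 'I_k) :
  #|[set g in sym_patterns n k | [forall p : 'I_n * 'I_n, ((p.1 <= p.2)%N) ==> Q p (g p)]]| =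
  (\prod_(p : 'I_n * 'I_n | (p.1 <= p.2)%N) #|Q p|)%N.
Proof.
pose ext (g : fT) : fT := [ffun p : 'I_n * 'I_n => if (p.1 <= p.2)%N then g p else t0].
pose F := fun p : 'I_n * 'I_n => if (p.1 <= p.2)%N then Q p else pred1 t0.
have symP (g : fT) : [forall i : 'I_n, forall j : 'I_n, g (i, j) == g (j, i)] ->
    forall i j, g (i, j) = g (j, i).
  by move=> /forallP h i j; apply/eqP; have /forallP := h i; apply.
rewrite -(card_in_imset (f := ext)); last first.
  move=> g g'; rewrite !inE => /andP [gS _] /andP [g'S _] e.
  apply/ffunP => -[i j].
  have e1 (p : 'I_n * 'I_n) : (p.1 <= p.2)%N -> g p = g' p.
    by move=> hp; move/ffunP: e => /(_ p); rewrite /ext !ffunE hp.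
  case: (leqP i j) => [hij | hji]; first exact: e1.
  rewrite (symP g) // (symP g') //; apply: e1 => /=; exact: ltnW.
have -> : #|ext @: [set g in sym_patterns n k | [forall p : 'I_n * 'I_n, ((p.1 <= p.2)%N) ==> Q p (g p)]]|
    = #|(family F : simpl_pred {dffun forall p : 'I_n * 'I_n, 'I_k})|.
  apply: eq_card => h; apply/imsetP/familyP.
    move=> [g]; rewrite inE => /andP [_ /forallP C] -> p.
    rewrite /ext /F ffunE; case: ifP => hp; last by rewrite inE.
    by have := C p; rewrite hp.
  move=> hF.
  pose g : fT := [ffun p : 'I_n * 'I_n => if (p.1 <= p.2)%N then h p else h (p.2, p.1)].
  exists g.
    rewrite !inE; apply/andP; split.
      apply/forallP => i; apply/forallP => j; rewrite !ffunE /=.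
      case: (ltngtP i j) => hij //.
      by have -> : i = j by apply: val_inj.
    apply/forallP => p; apply/implyP => hp; rewrite ffunE hp.
    by have := hF p; rewrite /F hp.
  apply/ffunP => p; rewrite /ext !ffunE; case: ifP => hp; first by rewrite hp.
  by have := hF p; rewrite /F hp => /eqP ->.
rewrite card_family foldrE big_map big_enum /= (bigID (fun p : 'I_n * 'I_n => (p.1 <= p.2)%N)) /=.
rewrite [X in (_ * X)%N]big1 ?muln1; last first.
  by move=> p /negbTE hp; rewrite /F hp card1.
by apply: eq_bigr => p hp; rewrite /F hp.
Qed.
End Fam.
Lemma conj_cancel (R : comNzRingType) (I : R -> Prop) (HI : is_ideal I) n
  (U W Y : 'M[R]_n) : mxcong I (U *m W) 1%:M ->
  mxcong I (W^T *m (U^T *m Y *m U) *m W) Y.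
Proof.
move=> h.
have -> : W^T *m (U^T *m Y *m U) *m W = (U *m W)^T *m Y *m (U *m W).
  by rewrite !trmx_mul !mulmxA.
suff H : mxcong I ((U *m W)^T *m Y *m (U *m W)) ((1%:M)^T *m Y *m 1%:M).
  by rewrite trmx1 mul1mx mulmx1 in H.
apply (mxcong_mul HI); last exact h.
apply (mxcong_mul HI); first exact (mxcong_tr h).
exact (mxcong_refl HI _).
Qed.

Section Main.
Variables (R : comNzRingType) (I : R -> Prop) (HI : is_ideal I) (s : seq R)
  (Hs : reps I s) (ridx : R -> 'I_(size s))
  (Hr : forall x, I (x - s`_(ridx x))).
Variables (n : nat) (G U V : 'M[R]_n) (d : nat -> R).
Hypotheses (hU : unit_mod I U) (hV : unit_mod I V)
  (hG : mxcong I G (U *m diag_mx (\row_(i < n) d i) *m V)).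

Local Notation D := (diag_mx (\row_(i < n) d i)).
Local Notation X := (@mx_of_pattern R s n).
Local Notation S := (sym_patterns n (size s)).

Lemma stepA (Y : 'M[R]_n) :
  mxcong I (G^T *m Y *m G) 0 <-> mxcong I (D *m (U^T *m Y *m U) *m D) 0.
Proof.
set M := D *m (U^T *m Y *m U) *m D.
have eG : mxcong I (G^T *m Y *m G) (V^T *m M *m V).
  have -> : V^T *m M *m V = (U *m D *m V)^T *m Y *m (U *m D *m V).
    by rewrite /M !trmx_mul tr_diag_mx !mulmxA.
  apply (mxcong_mul HI); last exact hG.
  apply (mxcong_mul HI); first exact (mxcong_tr hG).
  exact (mxcong_refl HI _).
have [W [hVW _]] := hV.
split => h.
  have h1 : mxcong I (V^T *m M *m V) 0 := mxcong_trans HI (mxcong_sym HI eG) h.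
  apply: (mxcong_trans HI (mxcong_sym HI (conj_cancel HI M hVW))).
  have -> : (0 : 'M[R]_n) = W^T *m 0 *m W by rewrite mulmx0 mul0mx.
  apply (mxcong_mul HI); last exact (mxcong_refl HI _).
  apply (mxcong_mul HI); first exact (mxcong_refl HI _).
  exact h1.
apply: (mxcong_trans HI eG).
have -> : (0 : 'M[R]_n) = V^T *m 0 *m V by rewrite mulmx0 mul0mx.
apply (mxcong_mul HI); last exact (mxcong_refl HI _).
apply (mxcong_mul HI); first exact (mxcong_refl HI _).
exact h.
Qed.

Lemma condD_cong (Y Y' : 'M[R]_n) : mxcong I Y Y' ->
  mxcong I (D *m Y *m D) 0 -> mxcong I (D *m Y' *m D) 0.
Proof.
move=> hY h; apply: (mxcong_trans HI _ h).
apply (mxcong_mul HI); last exact (mxcong_refl HI _).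
apply (mxcong_mul HI); first exact (mxcong_refl HI _).
exact (mxcong_sym HI hY).
Qed.

Definition phi (f : {ffun 'I_n * 'I_n -> 'I_(size s)}) : {ffun 'I_n * 'I_n -> 'I_(size s)} :=
  [ffun p : 'I_n * 'I_n => ridx ((U^T *m X f *m U) p.1 p.2)].

Lemma X_phi f : mxcong I (X (phi f)) (U^T *m X f *m U).
Proof. move=> i j; rewrite /mx_of_pattern mxE ffunE /=; exact (cg_sym HI (Hr _)). Qed.

Lemma phi_inj : injective phi.
Proof.
move=> f g e.
have h : mxcong I (U^T *m X f *m U) (U^T *m X g *m U).
  apply: (mxcong_trans HI (mxcong_sym HI (X_phi f))); rewrite e; exact: X_phi.
have [W [hUW _]] := hU.
have h2 : mxcong I (X f) (X g).
  apply: (mxcong_trans HI (mxcong_sym HI (conj_cancel HI (X f) hUW))).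
  apply: (mxcong_trans HI _ (conj_cancel HI (X g) hUW)).
  apply (mxcong_mul HI); last exact (mxcong_refl HI _).
  apply (mxcong_mul HI); first exact (mxcong_refl HI _).
  exact h.
apply/ffunP => -[i j]; apply: (irr Hs); have := h2 i j; rewrite !mxE //.
Qed.

Lemma symX f : f \in S -> (X f)^T = X f.
Proof.
rewrite inE => /forallP hf; apply/matrixP => i j; rewrite !mxE.
by move: (hf j) => /forallP/(_ i)/eqP ->.
Qed.

Lemma phi_S f : f \in S -> phi f \in S.
Proof.
move=> fS; have sX := symX fS.
have sM : (U^T *m X f *m U)^T = U^T *m X f *m U by rewrite !trmx_mul trmxK sX mulmxA.
rewrite inE; apply/forallP => i; apply/forallP => j; rewrite !ffunE /=.
have -> : (U^T *m X f *m U) j i = (U^T *m X f *m U) i j by rewrite -{1}sM mxE.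
by [].
Qed.

Lemma phiS_eq : phi @: S = S.
Proof.
apply/eqP; rewrite eqEcard card_imset; last exact: phi_inj.
rewrite leqnn andbT; apply/subsetP => g /imsetP [f fS ->]; exact: phi_S.
Qed.

Lemma entryD (Y : 'M[R]_n) i j : (D *m Y *m D) i j = d i * Y i j * d j.
Proof. by rewrite mul_mx_diag mxE mul_diag_mx !mxE. Qed.

Lemma stepC g : g \in S ->
  (mxcong I (D *m X g *m D) 0 <->
   forall p : 'I_n * 'I_n, (p.1 <= p.2)%N -> I (d p.1 * d p.2 * s`_(g p))).
Proof.
rewrite inE => /forallP hg; split.
  move=> h [i j] /= _; have := h i j; rewrite entryD !mxE subr0.
  by rewrite mulrAC.
move=> h i j; rewrite entryD !mxE subr0.
case: (leqP i j) => hij.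
  by have := h (i, j) hij; rewrite /= mulrAC.
have := h (j, i) (ltnW hij); rewrite /=.
move: (hg j) => /forallP/(_ i)/eqP ->.
suff -> : d i * s`_(g (i, j)) * d j = d j * d i * s`_(g (i, j)) by [].
by rewrite mulrAC [d i * _]mulrC.
Qed.

Lemma count_main :
  #|[set f in S | `[< mxcong I (G^T *m X f *m G) 0 >]]| =
  (\prod_(p : 'I_n * 'I_n | (p.1 <= p.2)%N) #|Kset I s (d p.1 * d p.2)|)%N.
Proof.
have e1 : [set f in S | `[< mxcong I (G^T *m X f *m G) 0 >]] =
          [set f in S | `[< mxcong I (D *m X (phi f) *m D) 0 >]].
  apply/setP => f; rewrite !inE; congr (_ && _).
  apply/asboolP/asboolP => h.
    by apply: (condD_cong (mxcong_sym HI (X_phi f))); apply/stepA.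
  by apply/stepA; apply: (condD_cong (X_phi f)).
rewrite e1 -(card_imset _ phi_inj).
have e2 : phi @: [set f in S | `[< mxcong I (D *m X (phi f) *m D) 0 >]] =
          [set g in S | [forall p : 'I_n * 'I_n, ((p.1 <= p.2)%N) ==>
                          (g p \in Kset I s (d p.1 * d p.2))]].
  apply/setP => g; rewrite inE; apply/imsetP/andP.
    move=> [f]; rewrite inE => /andP [fS /asboolP h] ->; split; first exact: phi_S.
    apply/forallP => p; apply/implyP => hp; rewrite inE; apply/asboolP.
    by have := (stepC (phi_S fS)).1 h p hp; rewrite mulrAC.
  move=> [gS /forallP hg].
  have : g \in phi @: S by rewrite phiS_eq.
  move=> /imsetP [f fS eg]; exists f => //; rewrite inE fS /=; apply/asboolP.
  rewrite -eg; apply/(stepC gS) => p hp.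
  by have := implyP (hg p) hp; rewrite inE => /asboolP; rewrite mulrAC.
rewrite e2 (card_sym_fam (ridx 0) (fun p t => t \in Kset I s (d p.1 * d p.2))).
by apply: eq_bigr => p _; apply: eq_card.
Qed.

Lemma card_S : #|S| = (\prod_(p : 'I_n * 'I_n | (p.1 <= p.2)%N) size s)%N.
Proof.
transitivity #|[set g in S | [forall p : 'I_n * 'I_n, ((p.1 <= p.2)%N) ==> (fun _ => true) (g p)]]|.
  apply: eq_card => g; rewrite inE; case: (g \in S) => //=.
  by apply/esym/forallP => p; exact: implybT.
rewrite (@card_sym_fam n (size s) (ridx 0) (fun _ _ => true)).
by apply: eq_bigr => p _; rewrite -[in RHS](card_ord (size s)); apply: eq_card.
Qed.
End Main.
Theorem theorem2p3 (R : idomainType) (n : nat) (I : R -> Prop) (s : seq R)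
  (G U V : 'M[R]_n) (d : nat -> R) :
  dedekind_domain R ->
  is_ideal I ->
  reps I s ->
  unit_mod I U -> unit_mod I V ->
  (forall i : nat, (i.+1 < n)%N ->
     ideal_sub (principal_plus (d i.+1) I) (principal_plus (d i) I)) ->
  mxcong I G (U *m diag_mx (\row_(i < n) d i) *m V) ->
  prob_GtXG_zero I s G =
  \prod_(i < n) \prod_(j < n | (i <= j)%N)
     ((ideal_norm (principal_plus (d i * d j) I))%:R / (ideal_norm I)%:R : rat).
Proof.
move=> _ HI Hs hU hV _ hG.
have [ridx Hr] := @choice _ _ (fun x (b : 'I_(size s)) => I (x - s`_b)) (reps_idx Hs).
rewrite /prob_GtXG_zero (count_main HI Hs Hr hU hV hG) (card_S ridx n).
rewrite (normI HI Hs).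
rewrite pair_big_dep /= !natr_prod -prodf_div.
by apply: eq_bigr => p _; rewrite (normJ HI Hs Hr).
Qed.
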